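(* Let $F$ be $(\ell,\omega)$-relatively smooth on $\mathcal X\cap\mathcal S$. Then for any $\rho\ge2\ell$ and $x\in\mathcal X\cap\mathcal S$ we have $\Phi_{1/\rho}(x)\ge\Phi(x^+)$, where $x^+:=\arg\min_{y\in\mathcal X}\langle\nabla F(x),y\rangle+r(y)+(\rho-\ell)D_\omega(y,x)$.
   Context: Let $\mathcal X\subseteq\mathbb R^d$ be closed and convex, $\|\cdot\|$ a norm on $\mathbb R^d$. The problem is $\min_{x\in\mathcal X}\Phi(x):=F(x)+r(x)$, with $F$ differentiable and $r:\mathbb R^d\to\mathbb R$ convex, proper, lower semicontinuous. A DGF is $\omega:\mathrm{cl}(\mathcal S)\to\mathbb R$, $\mathcal S$ open with $\mathrm{ri}(\mathcal X)\subseteq\mathcal S$, $\omega$ continuously differentiable on $\mathcal S$ and $1$-strongly convex w.r.t. $\|\cdot\|$ on $\mathrm{cl}(\mathcal S)$; $D_\omega(x,y)=\omega(x)-\omega(y)-\langle\nabla\omega(y),x-y\rangle$. Bregman Moreau envelope: $\Phi_{1/\rho}(x):=\min_{y\in\mathcal X}[\Phi(y)+\rho D_\omega(y,x)]$ (minimizers assumed to exist). $F$ is $(\ell,\omega)$-relatively smooth on $\mathcal X\cap\mathcal S$ if for all $x,y\in\mathcal X\cap\mathcal S$: $-\ell D_\omega(x,y)\le F(x)-F(y)-\langle\nabla F(y),x-y\rangle\le\ell D_\omega(x,y)$. *)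

(* Defs.v *)
(* R^d is modelled as row vectors 'rV[R]_d over R : realType. *)
From HB Require Import structures.
From mathcomp Require Import all_boot all_order all_algebra.
From mathcomp Require Import all_classical all_reals all_analysis.
Set Implicit Arguments. Unset Strict Implicit. Unset Printing Implicit Defensive.
Import Order.TTheory GRing.Theory Num.Theory.
Import numFieldNormedType.Exports.
Local Open Scope classical_set_scope.
Local Open Scope ring_scope.

Section Defs.
Variables (R : realType) (d : nat).
Notation V := 'rV[R]_d.

Definition dotv (u v : V) : R := \sum_(i < d) u ord0 i * v ord0 i.

Definition is_norm (N : V -> R) : Prop :=
  [/\ forall x, N x = 0 -> x = 0,
      forall (a : R) x, N (a *: x) = `|a| * N x
    & forall x y, N (x + y) <= N x + N y].

Definition convex_setV (C : set V) : Prop :=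
  forall x y (t : R), C x -> C y -> 0 <= t <= 1 -> C (t *: x + (1 - t) *: y).

Definition convex_fun (f : V -> R) : Prop :=
  forall x y (t : R), 0 <= t <= 1 ->
    f (t *: x + (1 - t) *: y) <= t * f x + (1 - t) * f y.

Definition aff_hull (C : set V) : set V :=
  [set z | exists n (c : 'I_n -> R) (p : 'I_n -> V),
      [/\ forall i, C (p i), \sum_(i < n) c i = 1 & z = \sum_(i < n) c i *: p i]].

Definition rel_interior (C : set V) : set V :=
  [set x | C x /\ exists2 e : R, 0 < e &
      forall y, aff_hull C y -> `|y - x| < e -> C y].

Definition has_grad (f : V -> R) (g : V) (x : V) : Prop :=
  differentiable f x /\ forall h, 'd f x h = dotv g h.

Definition strongly_convex1 (N : V -> R) (f : V -> R) (C : set V) : Prop :=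
  forall x y (t : R), C x -> C y -> 0 <= t <= 1 -> C (t *: x + (1 - t) *: y) ->
    f (t *: x + (1 - t) *: y)
      <= t * f x + (1 - t) * f y - t * (1 - t) / 2 * (N (x - y)) ^+ 2.

Definition is_DGF (N : V -> R) (X S : set V) (omega : V -> R) (gomega : V -> V) : Prop :=
  [/\ open S, rel_interior X `<=` S,
      (forall x, S x -> has_grad omega (gomega x) x),
      {in S, continuous gomega}
    & strongly_convex1 N omega (closure S)].

Definition bregman (omega : V -> R) (gomega : V -> V) (x y : V) : R :=
  omega x - omega y - dotv (gomega y) (x - y).

Definition rel_smooth (F : V -> R) (gradF : V -> V) (l : R)
    (omega : V -> R) (gomega : V -> V) (A : set V) : Prop :=
  forall x y, A x -> A y ->
    - l * bregman omega gomega x y <= F x - F y - dotv (gradF y) (x - y)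
    <= l * bregman omega gomega x y.

Definition moreau_env (Phi : V -> R) (omega : V -> R) (gomega : V -> V)
    (X : set V) (rho : R) (x : V) : R :=
  inf [set Phi y + rho * bregman omega gomega y x | y in X].

End Defs.

(* Main.v *)
Require Import Defs.
From HB Require Import structures.
From mathcomp Require Import all_boot all_order all_algebra.
From mathcomp Require Import all_classical all_reals all_analysis.
From mathcomp Require Import ring lra.
Import Order.TTheory GRing.Theory Num.Theory.
Import numFieldNormedType.Exports.
Local Open Scope classical_set_scope.
Local Open Scope ring_scope.
Lemma simplex_mem (R : realType) d (X : set 'rV[R]_d) (x : 'rV[R]_d) n
  (v : 'I_n -> 'rV[R]_d) (lam : 'I_n -> R) :
  convex_setV X -> X x -> (forall i, X (x + v i)) -> (forall i, 0 <= lam i) ->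
  \sum_i lam i <= 1 -> X (x + \sum_i lam i *: v i).
Proof.
move=> cX Xx; elim: n v lam => [|n IH] v lam Xv l0 l1.
  by rewrite big_ord0 addr0.
rewrite big_ord_recr /=; rewrite big_ord_recr /= in l1.
set a := lam ord_max in l1 *.
have s0 : 0 <= \sum_(i < n) lam (widen_ord (leqnSn n) i) by apply: sumr_ge0.
have [a1|a1] := eqVneq a 1.
  have s00 : \sum_(i < n) lam (widen_ord (leqnSn n) i) = 0.
    by apply/eqP; rewrite eq_le s0 andbT; move: l1; rewrite a1 => ?; lra.
  have := s00 => /eqP; rewrite psumr_eq0 => [/allP H|i _]; last exact: l0.
  rewrite big1 ?add0r ?a1 ?scale1r //.
  move=> i _; have /eqP -> := H i (mem_index_enum _); by rewrite scale0r.
have aL : a < 1 by rewrite lt_neqAle a1 /=; have := l0 ord_max; rewrite -/a; lra.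
have a0 : 0 <= a by exact: l0.
have b0 : 1 - a != 0 by rewrite subr_eq0 eq_sym.
have := IH (fun i => v (widen_ord (leqnSn n) i)) (fun i => lam (widen_ord (leqnSn n) i) / (1 - a)).
move=> /(_ (fun i => Xv _)) /(_ (fun i => divr_ge0 (l0 _) _)).
have b0' : 0 <= 1 - a by lra.
move=> /(_ b0'); rewrite -mulr_suml ler_pdivrMr ?mul1r; last by lra.
move=> /(_ ltac:(lra)) Xin.
have := cX _ _ a (Xv ord_max) Xin; rewrite a0 /= ltW // => /(_ isT).
congr X; rewrite !scalerDr scaler_sumr.

rewrite (eq_bigr (fun i => lam (widen_ord (leqnSn n) i) *: v (widen_ord (leqnSn n) i))); last first.
  by move=> i _; rewrite scalerA mulrCA divff // mulr1.
rewrite scalerBl scale1r addrACA [a *: x + _]addrC subrK.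
by rewrite [_ + a *: v _]addrC.
Qed.
Lemma coef_le_norm (R : realType) d (u : 'rV[R]_d) j : `|u 0 j| <= `|u|.
Proof.
rewrite [leRHS]/Num.norm /= mx_normrE; apply/bigmax_geP; right => /=.
by exists (0, j).
Qed.

Lemma scalar_bound (R : realType) d (f : {scalar 'rV[R]_d}) (u : 'rV[R]_d) :
  `|f u| <= (\sum_j `|f (delta_mx 0 j)|) * `|u|.
Proof.
rewrite {1}(row_sum_delta u) linear_sum mulr_suml.
apply: le_trans (ler_norm_sum _ _ _) _; apply: ler_sum => j _.
rewrite linearZ /= normrM mulrC; apply: ler_wpM2l => //; exact: coef_le_norm.
Qed.

Lemma max_family (R : realType) d (X : set 'rV[R]_d) (x : 'rV[R]_d) :
  exists s : seq 'rV[R]_d, [/\ free s, (forall v, v \in s -> X (x + v)) &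
    (forall v, X (x + v) -> v \in span s)].
Proof.
pose P k := `[< exists s : seq 'rV[R]_d,
   [/\ size s = k, free s & forall v, v \in s -> X (x + v)] >].
have P0 : exists k, P k.
  by exists 0%N; apply/asboolP; exists [::]; split => //; exact: nil_free.
have Pub : forall k, P k -> (k <= \dim (fullv : {vspace 'rV[R]_d}))%N.
  move=> k /asboolP [s [<- /eqP fs _]]; rewrite -fs; apply: dimvS; exact: subvf.
case: (ex_maxnP P0 Pub) => k /asboolP [s [sk fs Xs]] kmax.
exists s; split => // v Xv; apply: contraT => vs.
have : P k.+1.
  apply/asboolP; exists (v :: s); split => /=; first by rewrite sk.
    by rewrite free_cons vs.
  by move=> w; rewrite in_cons => /orP[/eqP->|/Xs].
by move/kmax; rewrite ltnn.
Qed.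

Lemma aff_hull_sub (R : realType) d (X : set 'rV[R]_d) (x : 'rV[R]_d) (s : seq 'rV[R]_d) :
  (forall v, X (x + v) -> v \in span s) ->
  forall y, aff_hull X y -> y - x \in span s.
Proof.
move=> Hs y [n [c [p [Xp c1 ->]]]].
have -> : \sum_(i < n) c i *: p i - x = \sum_(i < n) c i *: (p i - x).
  under [RHS]eq_bigr do rewrite scalerBr.
  by rewrite sumrB -scaler_suml c1 scale1r.
apply: memv_suml => i _; apply: memvZ; apply: Hs.
by rewrite addrC subrK.
Qed.

Lemma relint_exists (R : realType) d (X : set 'rV[R]_d) (x : 'rV[R]_d) :
  convex_setV X -> X x ->
  exists c, X c /\ forall p tau, X p -> 0 < tau <= 1 ->
    rel_interior X (tau *: c + (1 - tau) *: p).
Proof.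
move=> cX Xx.
have [s [fs Xs Hs]] := @max_family _ _ X x.
pose k := size s; pose t := in_tuple s.
pose m : R := k.+1%:R; pose w := m^-1.
have m1 : 1 <= m by rewrite /m ler1n.
have m0 : 0 < m by lra.
have wm : w * m = 1 by rewrite /w mulVf // gt_eqF.
have w0 : 0 < w by rewrite /w invr_gt0.
have km : k%:R = m - 1 by rewrite /m -natr1 addrK.
pose c := x + \sum_(i < k) w *: t`_i.
have Xti : forall i : 'I_k, X (x + t`_i) by move=> i; apply: Xs; apply: mem_nth.
have Xc : X c.
  apply: simplex_mem => // [i|]; first exact: ltW.
  rewrite sumr_const card_ord -mulr_natr km; nra.
pose C := \sum_(i < k) \sum_j `|coord t i (delta_mx 0 j)|.
have C0 : 0 <= C by apply: sumr_ge0 => i _; apply: sumr_ge0.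
pose e := (m ^+ 2 * (C + 1))^-1.
have e0 : 0 < e by rewrite /e invr_gt0 mulr_gt0 ?exprn_gt0 //; lra.
have K : forall y, y - x \in span s -> `|y - c| < e -> X y.
  move=> y ys yc.
  have -> : y = x + \sum_i coord t i (y - x) *: t`_i.
    by rewrite -coord_span // addrC subrK.
  have coordE : forall i, coord t i (y - x) = coord t i (y - c) + w.
    move=> i; have -> : y - x = (y - c) + (c - x) by rewrite addrA subrK.
    rewrite linearD /=; congr (_ + _).
    by rewrite /c addrC addKr coord_sum_free.
  have dB : forall i, `|coord t i (y - c)| <= w ^+ 2.
    move=> i; have SB := @scalar_bound _ _ (coord t i) (y - c); apply: (le_trans SB).
    have Ci : \sum_j `|coord t i (delta_mx 0 j)| <= C.
      rewrite /C (bigD1 i) //= lerDl; apply: sumr_ge0 => j _; apply: sumr_ge0 => *; exact: normr_ge0.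
    have Ce : C * e <= w ^+ 2.
      rewrite /e invfM mulrCA /w exprVn; apply: ler_piMr; first by rewrite invr_ge0 exprn_ge0 // ltW.
      rewrite ler_pdivrMr; lra.
    apply: le_trans _ Ce; apply: ler_pM => //; first by apply: sumr_ge0.
    exact: ltW.
  apply: simplex_mem => // [i|].
    rewrite coordE; have := dB i; rewrite ler_norml => /andP[H1 _].
    have : w ^+ 2 <= w by rewrite expr2; nra.
    lra.
  under eq_bigr do rewrite coordE.
  rewrite big_split /= sumr_const card_ord -mulr_natr km.
  have : \sum_(i < k) coord t i (y - c) <= w ^+ 2 * (m - 1).
    have : \sum_(i < k) coord t i (y - c) <= \sum_(i < k) w ^+ 2.
      by apply: ler_sum => i _; have := dB i; rewrite ler_norml => /andP[].
    by rewrite sumr_const card_ord -mulr_natr km.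
  nra.
exists c; split => // p tau Xp /andP[tau0 tau1].
split; first by apply: cX => //; rewrite ltW.
exists (tau * e); first exact: mulr_gt0.
move=> y yaff yz.
pose z := x + tau^-1 *: ((y - x) - (1 - tau) *: (p - x)).
have tau0' : tau != 0 by rewrite gt_eqF.
have Xz : X z.
  apply: K.
    rewrite /z addrC addKr; apply: memvZ; apply: memvB.
      exact: (@aff_hull_sub _ _ X x s Hs _ yaff).
    by apply: memvZ; apply: Hs; rewrite addrC subrK.
  have -> : z - c = tau^-1 *: (y - (tau *: c + (1 - tau) *: p)).
    by apply/rowP => j; rewrite !mxE; field.
  rewrite normrZ ger0_norm ?invr_ge0 ?ltW // ltr_pdivrMl //.
have -> : y = tau *: z + (1 - tau) *: p.
  by apply/rowP => j; rewrite !mxE; field.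
by apply: cX => //; rewrite ltW.
Qed.

Lemma pick_tau (R : realType) (dl e1 e2 M1 M2 : R) :
  0 < dl -> 0 < e1 -> 0 < e2 -> 0 <= M1 -> 0 <= M2 ->
  exists tau, [/\ 0 < tau <= 1, tau < dl, tau * M1 <= e1 & tau * M2 <= e2].
Proof.
move=> d0 e10 e20 M10 M20.
pose a := e1 / (M1 + 1); pose b := e2 / (M2 + 1).
have a0 : 0 < a by rewrite divr_gt0 //; lra.
have b0 : 0 < b by rewrite divr_gt0 //; lra.
have aM : a * (M1 + 1) = e1 by rewrite /a mulfVK // gt_eqF //; lra.
have bM : b * (M2 + 1) = e2 by rewrite /b mulfVK // gt_eqF //; lra.
exists (Num.min (Num.min 1 (dl / 2)) (Num.min a b)).
set tau := Num.min _ _.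
have t1 : tau <= 1 by rewrite /tau !ge_min lexx.
have t2 : tau <= dl / 2 by rewrite /tau !ge_min lexx orbT.
have t3 : tau <= a by rewrite /tau !ge_min lexx !orbT.
have t4 : tau <= b by rewrite /tau !ge_min lexx !orbT.
have t0 : 0 < tau by rewrite /tau !lt_min ltr01 a0 b0 divr_gt0.
split; [by rewrite t0 t1 | lra | nra | nra].
Qed.

Lemma limit_le (R : realType) (h : R -> R) (h0 A B : R) :
  (forall e, 0 < e -> exists2 dl, 0 < dl & forall tau, 0 < tau -> tau < dl -> `|h0 - h tau| < e) ->
  (forall tau, 0 < tau <= 1 -> h tau <= A + tau * B) -> h0 <= A.
Proof.
move=> hc hb; apply/ler_addgt0Pr => e e0.
have [dl dl0 Hd] := hc (e / 2) ltac:(lra).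
have [tau [/andP[t0 t1] tdl tB _]] := @pick_tau R dl (e / 2) 1 `|B| 0 dl0 ltac:(lra) ltr01 (normr_ge0 _) (lexx _).
have := Hd tau t0 tdl; rewrite ltr_norml => /andP[_ H2].
have := hb tau; rewrite t0 t1 => /(_ isT) H3.
have : tau * B <= tau * `|B| by rewrite ler_pM2l // ler_norm.
lra.
Qed.

Lemma cont_eps (R : realType) d (f : 'rV[R]_d -> R) p :
  {for p, continuous f} -> forall e, 0 < e ->
  exists2 dl, 0 < dl & forall z, `|p - z| < dl -> `|f p - f z| < e.
Proof.
move=> /cvgrPdist_lt H e e0; have := H e e0.
move=> /nbhs_ballP [dl dl0 Hb]; exists dl => // z pz; apply: Hb.
by rewrite -ball_normE /ball_ /=.
Qed.

Lemma open_eps (R : realType) d (S : set 'rV[R]_d) x :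
  open S -> S x -> exists2 dl, 0 < dl & forall z, `|x - z| < dl -> S z.
Proof.
move=> oS Sx; have : open_nbhs x S by split.
rewrite open_nbhsE => -[_ /nbhs_ballP [dl dl0 Hb]]; exists dl => // z pz; apply: Hb.
by rewrite -ball_normE /ball_ /=.
Qed.

Lemma dotvDr (R : realType) d (g u v : 'rV[R]_d) : dotv g (u + v) = dotv g u + dotv g v.
Proof. by rewrite /dotv -big_split; apply: eq_bigr => i _; rewrite mxE mulrDr. Qed.

Lemma dotvZr (R : realType) d (g u : 'rV[R]_d) a : dotv g (a *: u) = a * dotv g u.
Proof. by rewrite /dotv mulr_sumr; apply: eq_bigr => i _; rewrite mxE mulrCA. Qed.

Lemma dotvNr (R : realType) d (g u : 'rV[R]_d) : dotv g (- u) = - dotv g u.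
Proof. by rewrite -scaleN1r dotvZr mulN1r. Qed.

Lemma dotvBr (R : realType) d (g u v : 'rV[R]_d) : dotv g (u - v) = dotv g u - dotv g v.
Proof. by rewrite dotvDr dotvNr. Qed.

Lemma dotv0r (R : realType) d (g : 'rV[R]_d) : dotv g 0 = 0.
Proof. by rewrite -(scale0r 0) dotvZr mul0r. Qed.

Lemma breg_lower (R : realType) d (N : 'rV[R]_d -> R) (S : set 'rV[R]_d)
  (omega : 'rV[R]_d -> R) (gomega : 'rV[R]_d -> 'rV[R]_d) x y :
  open S -> S x -> has_grad omega (gomega x) x ->
  strongly_convex1 N omega (closure S) -> closure S y ->
  N (y - x) ^+ 2 / 2 <= bregman omega gomega y x.
Proof.
move=> oS Sx [dw dg] sc Sy.
set v := y - x.
have Hc : (fun h : R => h^-1 *: ((omega \o shift x) (h *: v) - omega x)) @ 0^'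
          --> dotv (gomega x) v.
  by rewrite -dg -deriveE //; exact: diff_derivable.
rewrite /bregman -/v.
suff : dotv (gomega x) v <= omega y - omega x - N v ^+ 2 / 2 by lra.
apply/ler_addgt0Pr => e e0.
have := (proj1 (cvgrPdist_lt _ _) Hc) (e / 2) ltac:(lra).
rewrite near_withinE => /nbhs_ballP [dl dl0 Hb].
have [dS dS0 HS] := @open_eps _ _ S x oS Sx.
have N0 : 0 <= N v ^+ 2 / 2 by rewrite divr_ge0 // sqr_ge0.
have [s [/andP[s0 s1] sdl sv sN]] :=
  @pick_tau R dl (dS / 2) (e / 2) `|v| (N v ^+ 2 / 2) dl0 ltac:(lra) ltac:(lra) (normr_ge0 _) N0.
have := Hb s; rewrite -ball_normE /ball_ /= sub0r normrN gtr0_norm // => /(_ sdl).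
move=> /(_ (lt0r_neq0 s0)) /=.
set q := _ *: _.
move=> Hq.
have E : s *: y + (1 - s) *: x = s *: v + x.
  by apply/rowP => j; rewrite !mxE; ring.
have Sz : S (s *: v + x).
  apply: HS; rewrite opprD addrCA subrr addr0 normrN normrZ gtr0_norm //; lra.
have := sc y x s Sy (subset_closure Sx); rewrite (ltW s0) s1 E => /(_ isT (subset_closure Sz)).
rewrite -/v => Hsc.
have sq : s * q = omega (s *: v + x) - omega x.
  by rewrite /q /= mulrA mulfV ?gt_eqF // mul1r.
have := Hq; rewrite ltr_norml => /andP[H1 H2].
have H3 : s * dotv (gomega x) v <= s * q + s * (e / 2).
  rewrite -mulrDr ler_pM2l //; lra.
have H4 : s * (s * (N v ^+ 2 / 2)) <= s * (e / 2) by rewrite ler_pM2l.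
rewrite -(ler_pM2l s0).
have H5 : s * (1 - s) / 2 * N v ^+ 2 = s * (N v ^+ 2 / 2) - s * (s * (N v ^+ 2 / 2)).
  by field.
lra.
Qed.

Lemma dot_comb (R : realType) d (g u v : 'rV[R]_d) a b :
  dotv g (a *: u + b *: v) = a * dotv g u + b * dotv g v.
Proof. by rewrite dotvDr !dotvZr. Qed.

Lemma extend (R : realType) d (N : 'rV[R]_d -> R) (X S : set 'rV[R]_d)
  (omega : 'rV[R]_d -> R) (gomega : 'rV[R]_d -> 'rV[R]_d)
  (F : 'rV[R]_d -> R) (gradF : 'rV[R]_d -> 'rV[R]_d) (l : R) (x c p : 'rV[R]_d) :
  strongly_convex1 N omega (closure S) ->
  (forall z, has_grad F (gradF z) z) ->
  rel_smooth F gradF l omega gomega (X `&` S) ->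
  rel_interior X `<=` S -> X x -> S x ->
  (forall tau, 0 < tau <= 1 -> rel_interior X (tau *: c + (1 - tau) *: p)) ->
  [/\ closure S p,
     (0 <= l -> F p - F x - dotv (gradF x) (p - x) <= l * bregman omega gomega p x)
   & (0 <= l -> - l * bregman omega gomega p x <= F p - F x - dotv (gradF x) (p - x))].
Proof.
move=> sc Fg rs relS Xx Sx Hz.
pose z tau := tau *: c + (1 - tau) *: p.
have Sz : forall tau, 0 < tau <= 1 -> S (z tau) by move=> tau /Hz /relS.
have Xz : forall tau, 0 < tau <= 1 -> X (z tau) by move=> tau /Hz [].
have Sc : S c.
  have := Sz 1 ltac:(by rewrite ltr01 lexx).
  by rewrite /z subrr scale0r addr0 scale1r.
have pz : forall tau, `|p - z tau| = tau * `|c - p| \/ tau < 0.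
  move=> tau; have [t0|t0] := leP 0 tau; last by right.
  left; have -> : p - z tau = tau *: (p - c) by apply/rowP => j; rewrite !mxE; ring.
  by rewrite normrZ ger0_norm // distrC.
have cp0 : 0 <= `|c - p| := normr_ge0 _.
have Sp : closure S p.
  move=> B /nbhs_ballP [dl /= dl0 Hb].
  have [tau [/andP[t0 t1] _ tM _]] :=
    @pick_tau R 1 (dl / 2) 1 `|c - p| 0 ltr01 ltac:(lra) ltr01 cp0 (lexx _).
  exists (z tau); split; first by apply: Sz; rewrite t0 t1.
  apply: Hb; rewrite -ball_normE /ball_ /=.
  case: (pz tau) => [->|]; lra.
pose g := gradF x.
pose D y := bregman omega gomega y x.
pose Q y := F x + dotv g (y - x).
have zx : forall tau, z tau - x = tau *: (c - x) + (1 - tau) *: (p - x).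
  by move=> tau; apply/rowP => j; rewrite !mxE; ring.
have Qz : forall tau, Q (z tau) = tau * Q c + (1 - tau) * Q p.
  by move=> tau; rewrite /Q zx dot_comb; ring.
have Dz : forall tau, 0 < tau <= 1 -> D (z tau) <= tau * D c + (1 - tau) * D p.
  move=> tau /andP[t0 t1].
  have := sc c p tau (subset_closure Sc) Sp; rewrite (ltW t0) t1.
  move=> /(_ isT (subset_closure (Sz tau ltac:(by rewrite t0 t1)))).
  rewrite -/(z tau) => H.
  have Hn : 0 <= tau * (1 - tau) / 2 * N (c - p) ^+ 2.
    by rewrite mulr_ge0 ?sqr_ge0 // divr_ge0 // mulr_ge0 //; lra.
  rewrite /D /bregman zx dot_comb.
  have E : tau * (omega c - omega x - dotv (gomega x) (c - x)) +
    (1 - tau) * (omega p - omega x - dotv (gomega x) (p - x)) =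
    tau * omega c + (1 - tau) * omega p - omega x
    - (tau * dotv (gomega x) (c - x) + (1 - tau) * dotv (gomega x) (p - x)) by ring.
  rewrite E; lra.
have Fc : forall e, 0 < e -> exists2 dl, 0 < dl &
    forall tau, 0 < tau -> tau < dl -> `|F p - F (z tau)| < e.
  move=> e e0.
  have [dF dF0 HF] := @cont_eps _ _ F p
    (differentiable_continuous (proj1 (Fg p))) e e0.
  exists (dF / (`|c - p| + 1)); first by rewrite divr_gt0 //; lra.
  move=> tau t0 tdl; apply: HF; case: (pz tau) => [->|]; last lra.
  move: tdl; rewrite ltr_pdivlMr; last lra.
  nra.
have rsz : forall tau, 0 < tau <= 1 ->
    - l * D (z tau) <= F (z tau) - Q (z tau) <= l * D (z tau).
  move=> tau tI; rewrite /Q opprD addrA.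
  by apply: rs; split => //; [apply: Xz | apply: Sz].
split => // l0.
- suff : F p <= Q p + l * D p by rewrite /Q /D /g; lra.
  apply: (@limit_le R (fun tau => F (z tau)) (F p) _ ((Q c - Q p) + l * (D c - D p))) => //.
  move=> tau tI; have /andP[_ H1] := rsz tau tI.
  have H2 := Dz tau tI.
  have H3 : l * D (z tau) <= l * (tau * D c + (1 - tau) * D p) by rewrite ler_wpM2l.
  have E : Q p + l * D p + tau * (Q c - Q p + l * (D c - D p)) =
    (tau * Q c + (1 - tau) * Q p) + l * (tau * D c + (1 - tau) * D p) by ring.
  rewrite E -Qz; lra.
- suff : Q p - l * D p <= F p by rewrite /Q /D /g; lra.
  rewrite -lerN2.
  apply: (@limit_le R (fun tau => - F (z tau)) (- F p) _ (- (Q c - Q p) + l * (D c - D p))).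
    move=> e e0; have [dl dl0 Hd] := Fc e e0; exists dl => // tau t0 tdl.
    by rewrite -opprD normrN; apply: Hd.
  move=> tau tI; have /andP[H1 _] := rsz tau tI.
  have H2 := Dz tau tI.
  have H3 : l * D (z tau) <= l * (tau * D c + (1 - tau) * D p) by rewrite ler_wpM2l.
  have E : - (Q p - l * D p) + tau * (- (Q c - Q p) + l * (D c - D p)) =
    - (tau * Q c + (1 - tau) * Q p) + l * (tau * D c + (1 - tau) * D p) by ring.
  rewrite E -Qz; lra.
Qed.

Theorem lemma8 (R : realType) (d : nat)
  (N : 'rV[R]_d -> R) (X S : set 'rV[R]_d)
  (omega : 'rV[R]_d -> R) (gomega : 'rV[R]_d -> 'rV[R]_d)
  (F r : 'rV[R]_d -> R) (gradF : 'rV[R]_d -> 'rV[R]_d) (l rho : R)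
  (x xp : 'rV[R]_d) :
  is_norm N ->
  closed X -> convex_setV X ->
  is_DGF N X S omega gomega ->
  (forall z, has_grad F (gradF z) z) ->
  convex_fun r -> lower_semicontinuous (fun z => (r z)%:E) ->
  (* a minimizer in the definition of Phi_{1/rho}(x) exists *)
  (exists2 ys, X ys &
     forall y, X y -> (F ys + r ys) + rho * bregman omega gomega ys x
                      <= (F y + r y) + rho * bregman omega gomega y x) ->
  rel_smooth F gradF l omega gomega (X `&` S) ->
  2 * l <= rho ->
  X x -> S x ->
  (* xp = x^+ is a minimizer over X of <gradF x, y> + r y + (rho - l) D(y, x) *)
  X xp ->
  (forall y, X y ->
     dotv (gradF x) xp + r xp + (rho - l) * bregman omega gomega xp x
     <= dotv (gradF x) y + r y + (rho - l) * bregman omega gomega y x) ->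
  F xp + r xp <= moreau_env (fun y => F y + r y) omega gomega X rho x.
Proof.
move=> [N0 _ _] _ cX [oS relS gw _ sc] Fg _ _ [ys Xys ysmin] rs l2 Xx Sx Xxp xpmin.
have [c [Xc Hc]] := @relint_exists _ _ X x cX Xx.
pose D y := bregman omega gomega y x.
have ext : forall p, X p -> _ := fun p Xp =>
  @extend R d N X S omega gomega F gradF l x c p sc Fg rs relS Xx Sx
    (fun tau tI => Hc p tau Xp tI).
have Dge : forall p, X p -> N (p - x) ^+ 2 / 2 <= D p.
  move=> p Xp; have [Sp _ _] := ext p Xp.
  exact: (@breg_lower R d N S omega gomega x p oS Sx (gw x Sx) sc Sp).
suff key : F xp + r xp <= F ys + r ys + rho * D ys.
  rewrite /moreau_env; apply: lb_le_inf.
    by exists (F x + r x + rho * bregman omega gomega x x); exists x.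
  move=> _ [y Xy <-]; apply: le_trans key _; exact: ysmin.
have [l0|l0] := leP 0 l.
  have [_ Uxp _] := ext xp Xxp.
  have [_ _ Lys] := ext ys Xys.
  have Dxp : 0 <= D xp.
    apply: le_trans (Dge xp Xxp); by rewrite divr_ge0 // sqr_ge0.
  have M := xpmin ys Xys.
  rewrite !dotvBr in Uxp Lys.
  rewrite /D in Dxp *.
  set Dx := bregman omega gomega xp x in Uxp Dxp M *.
  set Dy := bregman omega gomega ys x in Lys M *.
  have H1 : 0 <= (rho - 2 * l) * Dx by rewrite mulr_ge0 //; lra.
  have E1 : (rho - 2 * l) * Dx = rho * Dx - 2 * (l * Dx) by ring.
  have E2 : (rho - l) * Dx = rho * Dx - l * Dx by ring.
  have E3 : (rho - l) * Dy = rho * Dy - l * Dy by ring.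
  have E4 : - l * Dy = - (l * Dy) by ring.
  rewrite E2 E3 in M; rewrite E1 in H1; rewrite E4 in Lys.
  lra.
have eqx : forall y, X y -> S y -> y = x.
  move=> y Xy Sy.
  have := rs y x (conj Xy Sy) (conj Xx Sx) => /andP[H1 H2].
  have H3 := Dge y Xy.
  rewrite /D in H3.
  set Dy := bregman omega gomega y x in H1 H2 H3.
  have H4 : Dy <= 0 by nra.
  have : N (y - x) ^+ 2 = 0.
    apply/eqP; rewrite eq_le sqr_ge0 andbT; lra.
  move=> /eqP; rewrite expf_eq0 /= => /eqP /N0 /eqP; rewrite subr_eq0 => /eqP //.
have allx : forall p, X p -> p = x.
  move=> p Xp.
  have Ex : forall tau, 0 < tau <= 1 -> tau *: c + (1 - tau) *: p = x.
    move=> tau tI; have [Xz _] := Hc p tau Xp tI.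
    by apply: eqx => //; apply: relS; apply: Hc.
  have cx : c = x.
    by have := Ex 1 ltac:(by rewrite ltr01 lexx); rewrite subrr scale0r addr0 scale1r.
  have := Ex (1 / 2) ltac:(apply/andP; split; lra); rewrite cx => H.
  have -> : p = 2 *: ((1 / 2) *: x + (1 - 1 / 2) *: p) - x.
    by apply/rowP => j; rewrite !mxE; field.
  by rewrite H; apply/rowP => j; rewrite !mxE; ring.
rewrite (allx xp Xxp) (allx ys Xys) /D /bregman !subrr dotv0r subrr mulr0 addr0.
by [].
Qed.
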